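(* For every positive integer $d$, there exists a binary matrix $M$ such that $R_{binary}(M)\ge 4d$ and $R_{\mathbb{R}}(M)=3d$.
   Context: $R_{\mathbb{R}}$ is the usual rank over the reals. For a binary $n\times m$ matrix $M$, the binary rank $R_{binary}(M)$ is the least $k$ such that $M=UV$ with $U\in\{0,1\}^{n\times k}$, $V\in\{0,1\}^{k\times m}$, product computed with ordinary arithmetic. *)

(* Defs.v *)
From mathcomp Require Import all_boot all_order all_algebra.
From mathcomp Require Import Rstruct.
From Stdlib Require Rdefinitions.
Set Implicit Arguments. Unset Strict Implicit. Unset Printing Implicit Defensive.
Import GRing.Theory.
Local Open Scope ring_scope.

Definition realmx (n m : nat) (M : 'M[bool]_(n, m)) : 'M[Rdefinitions.R]_(n, m) :=
  map_mx (fun b : bool => (nat_of_bool b)%:R) M.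

Definition real_rank (n m : nat) (M : 'M[bool]_(n, m)) : nat := \rank (realmx M).

(* M = U V with U, V binary, product computed in ordinary (nat) arithmetic. *)
Definition binary_factorization (n m k : nat) (M : 'M[bool]_(n, m))
  (U : 'M[bool]_(n, k)) (V : 'M[bool]_(k, m)) : Prop :=
  forall i j, nat_of_bool (M i j) = (\sum_(l < k) U i l * V l j)%N.

(* R_binary(M) >= r : since R_binary(M) is the least k admitting a binary
   factorization (one always exists, e.g. k = n with U = I), this holds iff
   every binary factorization M = U V has inner dimension k >= r. *)
Definition binary_rank_ge (n m : nat) (M : 'M[bool]_(n, m)) (r : nat) : Prop :=
  forall (k : nat) (U : 'M[bool]_(n, k)) (V : 'M[bool]_(k, m)),
    binary_factorization M U V -> (r <= k)%N.

(* Main.v *)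
Require Import Defs.
From mathcomp Require Import all_boot all_order all_algebra.
From mathcomp Require Import Rstruct ring lra.
Import GRing.Theory Num.Theory.
Local Open Scope ring_scope.

Definition m0f (i j : nat) : bool := (j == i) || (j == (i + 1) %% 4)%N.
Definition M0 : 'M[bool]_4 := \matrix_(i < 4, j < 4) m0f i j.
Definition Cm : 'M[Rdefinitions.R]_(3,4) := \matrix_(i < 3, j < 4) (i == j :> nat)%:R.
Definition Dm : 'M[Rdefinitions.R]_(4,3) := \matrix_(i < 4, j < 3)
  (if (i == 0%N :> nat) && (j == 1%N :> nat) then -1 else ((i == j :> nat) && (i != 2%N :> nat))%:R + ((i == 3%N :> nat) && (j == 2%N :> nat))%:R).
Definition Am : 'M[Rdefinitions.R]_(4,3) := \matrix_(i < 4, j < 3)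
  (if (i == 3%N :> nat) && (j == 1%N :> nat) then -1 else ((i == j :> nat) || (i == 3%N :> nat))%:R).

Lemma M0_low : Cm *m (Defs.realmx M0 *m Dm) = 1%:M.
Proof.
apply/matrixP => i j; rewrite !mxE.
rewrite !(big_ord_recr, big_ord0, mxE) /= ?mxE.
case: i => [[|[|[|?]]] //= ?]; case: j => [[|[|[|?]]] //= ?]; rewrite /m0f /=; lra.
Qed.

Lemma M0_up : Defs.realmx M0 = Am *m (Cm *m Defs.realmx M0).
Proof.
apply/matrixP => i j; rewrite !mxE.
rewrite !(big_ord_recr, big_ord0, mxE) /= ?mxE.
case: i => [[|[|[|[|?]]]] //= ?]; case: j => [[|[|[|[|?]]]] //= ?]; rewrite /m0f /=; lra.
Qed.

Lemma sum_ge {k} (F : 'I_k -> nat) l : (F l <= \sum_i F i)%N.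
Proof. by rewrite (bigD1 l) //= leq_addr. Qed.

Lemma fool n (M : 'M[bool]_n) : (forall i, M i i) ->
  (forall i j, M i j -> M j i -> i = j) -> binary_rank_ge M n.
Proof.
move=> Hd Hf k U V HF.
have Hex : forall i, exists l, U i l && V l i.
  move=> i; have := HF i i; rewrite Hd /= => H.
  apply/existsP; apply: contraT; rewrite negb_exists => /forallP Hn.
  move: H; rewrite big1 // => l _; by have := Hn l; case: (U i l); case: (V l i).
pose f i := sval (sigW (Hex i)).
have Pf i : U i (f i) && V (f i) i by rewrite /f; case: sigW.
have key i j : f i = f j -> M i j.
  move=> E; have := HF i j; have := sum_ge (fun l => (U i l * V l j)%N) (f i).
  move: (Pf i) (Pf j); rewrite -E => /andP [-> _] /andP [_ ->] /=.
  by case: (M i j) => //= H E2; rewrite -E2 in H.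
have inj : injective f by move=> i j E; apply: Hf; apply: key.
by have := leq_card f inj; rewrite !card_ord.
Qed.

Fixpoint sz d := if d is d'.+1 then (4 + sz d')%N else 0%N.
Fixpoint Mb d : 'M[bool]_(sz d) := match d as d return 'M[bool]_(sz d) with
  | 0 => const_mx false
  | d'.+1 => block_mx M0 (const_mx false) (const_mx false) (Mb d') end.

Lemma Mb_diag d i : Mb d i i.
Proof.
elim: d i => [[]//|d IH] i /=.
rewrite -(splitK i); case: (split i) => a /=.
  by rewrite block_mxEul mxE /m0f eqxx.
by rewrite block_mxEdr.
Qed.

Lemma Mb_fool d i j : Mb d i j -> Mb d j i -> i = j.
Proof.
elim: d i j => [[]//|d IH] i j /=.
rewrite -(splitK i) -(splitK j); case: (split i) => a; case: (split j) => b /=.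
- rewrite !block_mxEul => H1 H2; congr (lshift _ _); apply/val_inj; move: H1 H2.
  rewrite !mxE.
  by case: a => [[|[|[|[|?]]]] //= ?]; case: b => [[|[|[|[|?]]]] //= ?].
- by rewrite block_mxEur mxE.
- by rewrite block_mxEdl mxE.
- by rewrite !block_mxEdr => H1 H2; rewrite (IH _ _ H1 H2).
Qed.

Lemma cz m n : const_mx ((nat_of_bool false)%:R : Rdefinitions.R) = 0 :> 'M[Rdefinitions.R]_(m,n).
Proof. by apply/matrixP => ? ?; rewrite !mxE. Qed.

Lemma rank_M0 : real_rank M0 = 3%N.
Proof.
rewrite /real_rank; apply/eqP; rewrite eqn_leq; apply/andP; split.
  rewrite M0_up; apply: leq_trans (mxrankM_maxr _ _) _; exact: rank_leq_row.
have := mxrank1 Rdefinitions.R 3; rewrite -M0_low => E.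
rewrite -{1}E; apply: leq_trans (mxrankM_maxr _ _) _; exact: mxrankM_maxl.
Qed.

Lemma rank_Mb d : real_rank (Mb d) = (3 * d)%N.
Proof.
elim: d => [|d IH]; first by apply/eqP; rewrite muln0 -leqn0; exact: rank_leq_row.
move: IH rank_M0; rewrite /real_rank /Defs.realmx /= map_block_mx !map_const_mx !cz rank_diag_block_mx.
by move=> -> ->; rewrite mulnS.
Qed.

Lemma sz_eq d : sz d = (4 * d)%N.
Proof. by elim: d => //= d ->; rewrite mulnS. Qed.

Theorem theorem3 (d : nat) : (0 < d)%N ->
  exists (n m : nat) (M : 'M[bool]_(n, m)),
    binary_rank_ge M (4 * d) /\
    real_rank M = (3 * d)%N.
Proof.
move=> _; exists (sz d), (sz d), (Mb d); split; last exact: rank_Mb.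
rewrite -sz_eq; apply: fool; [exact: Mb_diag | exact: Mb_fool].
Qed.
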